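(* Let $V$ be a finite set and let $A$ be a real symmetric matrix indexed by $V$. If $A$ does not contain any self-contained family of weighted chordless walks, then $A$ has a simplicial vertex.
   Context: An element $v\in V$ is simplicial in $A$ if $A_{yz}\ge\min\{A_{vy},A_{vz}\}$ for all distinct $y,z\in V\setminus\{v\}$. A walk is an ordered sequence $W=(v_0,\dots,v_p)$ ($p\ge1$) of elements of $V$; $V(W)=\{v_0,\dots,v_p\}$, $I(W)=\{v_1,\dots,v_{p-1}\}$. $W$ is weighted chordless in $A$ if $A_{v_{i-1}v_{i+1}}<\min\{A_{v_{i-1}v_i},A_{v_{i+1}v_i}\}$ for $1\le i\le p-1$. A finite family $\{W_1,\dots,W_k\}$ of walks is self-contained if $\bigcup_h V(W_h)=\bigcup_h I(W_h)$. *)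

(* Defs.v *)
From HB Require Import structures.
From mathcomp Require Import all_boot all_order all_algebra.
From mathcomp Require Import reals.
Set Implicit Arguments. Unset Strict Implicit. Unset Printing Implicit Defensive.
Import Order.TTheory GRing.Theory Num.Theory.
Local Open Scope ring_scope.

Section Defs.
Variables (R : realType) (V : finType) (A : V -> V -> R).

Definition simplicial (v : V) : Prop :=
  forall y z : V, y != v -> z != v -> y != z ->
    Num.min (A v y) (A v z) <= A y z.

(* A walk (v_0,...,v_p), p >= 1, is a sequence of length >= 2. *)
Definition is_walk (W : seq V) : bool := (2 <= size W)%N.

Definition walk_vertices (W : seq V) : {set V} := [set x in W].

(* I(W) = {v_1, ..., v_{p-1}} *)
Definition walk_interior (W : seq V) : {set V} :=
  [set x in take (size W - 2) (behead W)].

Fixpoint weighted_chordless (W : seq V) : bool :=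
  match W with
  | a :: ((b :: c :: _) as t) =>
      (A a c < Num.min (A a b) (A c b)) && weighted_chordless t
  | _ => true
  end.

Definition self_contained (F : seq (seq V)) : Prop :=
  \bigcup_(W <- F) walk_vertices W = \bigcup_(W <- F) walk_interior W.

Definition contains_sc_chordless_family : Prop :=
  exists F : seq (seq V),
    [/\ F != [::], all (fun W => is_walk W && weighted_chordless W) F
      & self_contained F].

End Defs.

(* Main.v *)
Require Import Defs.
From HB Require Import structures.
From mathcomp Require Import all_boot all_order all_algebra.
From mathcomp Require Import reals.
From Stdlib Require Import Classical.
Import Order.TTheory GRing.Theory Num.Theory.
Local Open Scope ring_scope.

Lemma in_bigcup_seq (T : finType) (I : eqType) (r : seq I) (g : I -> {set T}) i x :
  i \in r -> x \in g i -> x \in \bigcup_(j <- r) g j.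
Proof.
elim: r => [|a r IH] //=; rewrite inE big_cons => /orP[/eqP-> | ir] xg;
  rewrite inE; first by rewrite xg.
by rewrite IH ?orbT.
Qed.

Theorem lemma6 (R : realType) (V : finType) (A : V -> V -> R) :
  (0 < #|V|)%N ->
  (forall x y : V, A x y = A y x) ->
  ~ contains_sc_chordless_family A ->
  exists v : V, simplicial A v.
Proof.
move=> hV sym nF.
apply: NNPP => hn; apply: nF.
have ns v : exists y z, A y z < Num.min (A y v) (A z v).
  apply: NNPP => h; apply: hn; exists v => y z hy hz hyz.
  rewrite leNgt; apply/negP => lt; apply: h; exists y, z.
  by rewrite (sym y v) (sym z v).
pose P := [pred t : V * V * V | A t.1.1 t.2 < Num.min (A t.1.1 t.1.2) (A t.2 t.1.2)].
pose F := [seq [:: t.1.1; t.1.2; t.2] | t <- enum P].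
have inF y v z : A y z < Num.min (A y v) (A z v) -> [:: y; v; z] \in F.
  move=> h; apply/mapP; exists (y, v, z) => //; by rewrite mem_enum inE.
have cov x : x \in \bigcup_(W <- F) walk_interior W.
  have [y [z h]] := ns x.
  apply: in_bigcup_seq; first exact: (inF _ _ _ h).
  by rewrite /walk_interior inE /= inE.
exists F; split.
- case/card_gt0P: hV => v _; have [y [z h]] := ns v.
  by apply/eqP => F0; move: (inF _ _ _ h); rewrite F0.
- apply/allP => W /mapP [t]; rewrite mem_enum inE => h ->.
  by rewrite /is_walk /= h.
- apply/setP => x; rewrite cov.
  have [y [z h]] := ns x.
  apply: in_bigcup_seq; first exact: (inF _ _ _ h).
  by rewrite /walk_vertices inE !inE eqxx orbT.
Qed.
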